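(* Let $(X,\le)$ be a locally finite poset and $R$ a commutative ring with identity. Let $\eta\in[\mathbb{I}_{(X,\le)},R]$ be given by $\eta[x,x]=1$, $\eta[x,y]=-1$ if $x\prec y$, and $\eta[x,y]=0$ otherwise. Then $\eta$ is invertible in the incidence algebra and, for all $x\le y$, $\eta^{-1}[x,y]=|\mathbb{M}[x,y]|$, the number of maximal linearly ordered subsets of the interval $[x,y]$. Consequently, for $a\in X$ and $f,g:X_{\ge a}\to R$, one has $g(y)=f(y)-\sum_{a\le x\prec y}f(x)$ for all $y\ge a$ if and only if $f(y)=\sum_{a\le x\le y}|\mathbb{M}[x,y]|\,g(x)$ for all $y\ge a$.
   Context: A poset is locally finite if all intervals $[x,y]=\{z:x\le z\le y\}$ are finite. The cover relation: $x\prec y$ iff $x<y$ and there is no $z$ with $x<z<y$. $X_{\ge a}=\{x\in X: x\ge a\}$. The incidence algebra $[\mathbb{I}_{(X,\le)},R]$ consists of maps from intervals to $R$ with product $(f\star g)[x,z]=\sum_{x\le y\le z}f[x,y]g[y,z]$ and unit $\epsilon[x,y]=\delta_{x,y}$. *)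

(* Defs.v *)
From HB Require Import structures.
From mathcomp Require Import all_boot all_order all_algebra.
Set Implicit Arguments. Unset Strict Implicit. Unset Printing Implicit Defensive.
Import Order.TTheory GRing.Theory.

Local Open Scope order_scope.

(* A locally finite poset: a partial order together with, for every x y,
   a duplicate-free enumeration of the interval [x,y] = {z | x <= z <= y}.
   (Existence of such enumerations is exactly local finiteness.) *)
Record locfin (disp : Order.disp_t) (T : porderType disp) := LocFin {
  itv : T -> T -> seq T;
  itv_uniq : forall x y, uniq (itv x y);
  mem_itv : forall x y z, (z \in itv x y) = (x <= z <= y)
}.

Section Incidence.
Variables (disp : Order.disp_t) (T : porderType disp) (L : locfin T).
Local Open Scope ring_scope.
Variable R : comPzRingType.

(* Elements of the incidence algebra are represented by functions T -> T -> R,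
   of which only the values f x y with x <= y are relevant. *)
Definition inc_mul (f g : T -> T -> R) : T -> T -> R :=
  fun x z => \sum_(y <- itv L x z) f x y * g y z.

Definition inc_unit : T -> T -> R := fun x y => (x == y)%:R.

Definition inc_eq (f g : T -> T -> R) : Prop :=
  forall x y : T, (x <= y)%O -> f x y = g x y.

Definition inc_inverse (f finv : T -> T -> R) : Prop :=
  inc_eq (inc_mul f finv) inc_unit /\ inc_eq (inc_mul finv f) inc_unit.

End Incidence.

Definition covers (disp : Order.disp_t) (T : porderType disp) (x y : T) : Prop :=
  x < y /\ ~ (exists z, x < z < y).

Definition covb (disp : Order.disp_t) (T : porderType disp) (L : locfin T)
  (x y : T) : bool := (x < y) && ~~ has (fun z => x < z < y) (itv L x y).

Lemma covbP (disp : Order.disp_t) (T : porderType disp) (L : locfin T) (x y : T) :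
  reflect (covers x y) (covb L x y).
Proof.
rewrite /covb /covers; apply: (iffP andP) => -[xy H]; split => //.
- move=> [z /andP[xz zy]]; move/negP: H; apply; apply/hasP; exists z => //.
  by rewrite mem_itv (ltW xz) (ltW zy).
  by rewrite xz zy.
- apply/negP => /hasP [z _ Hz]; apply: H; by exists z.
Qed.

(* chains (linearly ordered subsets) of the interval [x,y], viewed as sets
   over the finite type of elements of itv L x y *)
Definition is_chain (disp : Order.disp_t) (T : porderType disp) (s : seq T)
  (A : {set seq_sub s}) : bool :=
  [forall u in A, forall v in A, ((val u <= val v) || (val v <= val u))%O].

Definition num_max_chains (disp : Order.disp_t) (T : porderType disp)
  (L : locfin T) (x y : T) : nat :=
  #|[set A : {set seq_sub (itv L x y)} | maxset (@is_chain _ _ (itv L x y)) A]|.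

(* Main.v *)
Require Import Defs.
From HB Require Import structures.
From mathcomp Require Import all_boot all_order all_algebra.
Set Implicit Arguments. Unset Strict Implicit. Unset Printing Implicit Defensive.
Import Order.TTheory GRing.Theory.
Section ChainCore.
Variables (T : choiceType) (le : rel T).
Hypothesis le_refl : reflexive le.
Hypothesis le_anti : forall a b, le a b -> le b a -> a = b.
Hypothesis le_trans : transitive le.

Definition cmp a b := le a b || le b a.
Definition ch (s : seq T) (A : {set seq_sub s}) : bool :=
  [forall u in A, forall v in A, cmp (ssval u) (ssval v)].
Definition MC s := [set A : {set seq_sub s} | maxset (@ch s) A].
Definition memT (s : seq T) (A : {set seq_sub s}) t := [exists u in A, ssval u == t].

Lemma cmpC a b : cmp a b = cmp b a.
Proof. by rewrite /cmp orbC. Qed.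

Lemma chP s (A : {set seq_sub s}) :
  reflect (forall u v, u \in A -> v \in A -> cmp (ssval u) (ssval v)) (ch A).
Proof.
apply: (iffP forallP) => [H u v uA vA|H u].
  by have /implyP/(_ uA)/forallP/(_ v)/implyP/(_ vA) := H u.
by apply/implyP => uA; apply/forallP => v; apply/implyP => vA; apply: H.
Qed.

Lemma maxchP s (A : {set seq_sub s}) :
  reflect (ch A /\ forall w, (forall u, u \in A -> cmp (ssval w) (ssval u)) -> w \in A)
    (maxset (@ch s) A).
Proof.
apply: (iffP maxsetP) => -[cA H]; split => //.
- move=> w Hw.
  have cB : ch (w |: A).
    apply/chP => u v; rewrite !in_setU1 => /orP[/eqP->|uA] /orP[/eqP->|vA].
    + by rewrite /cmp le_refl.
    + exact: Hw.
    + by rewrite cmpC; apply: Hw.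
    + by move/chP: cA; apply.
  have := H _ cB (subsetUr _ _) => <-.
  by rewrite setU11.
- move=> B cB AB; apply/setP => w; apply/idP/idP; last by move/(subsetP AB).
  move=> wB; apply: H => u uA.
  by move/chP: cB; apply=> //; apply: (subsetP AB).
Qed.

Lemma memTP s (A : {set seq_sub s}) t (Ht : t \in s) :
  memT A t = (SeqSub Ht \in A).
Proof.
apply/existsP/idP => [[u /andP[uA /eqP ut]]|H].
  by have -> : SeqSub Ht = u by apply: val_inj => /=; rewrite ut.
by exists (SeqSub Ht); rewrite H eqxx.
Qed.

Lemma memTE s (A : {set seq_sub s}) (u : seq_sub s) : memT A (ssval u) = (u \in A).
Proof.
by case: u => t Ht; rewrite memTP.
Qed.


Lemma MC_mem s (A : {set seq_sub s}) t : A \in MC s -> t \in s ->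
  (forall u, u \in A -> cmp t (ssval u)) -> memT A t.
Proof.
rewrite inE => /maxchP[_ H] Ht Hc; rewrite (memTP _ Ht); exact: H.
Qed.

Lemma MC_ch s (A : {set seq_sub s}) : A \in MC s -> ch A.
Proof. by rewrite inE => /maxchP[]. Qed.

Variable I : T -> T -> seq T.
Hypothesis I_uniq : forall a b, uniq (I a b).
Hypothesis mem_I : forall a b c, (c \in I a b) = le a c && le c b.
Definition ltc a b := (a != b) && le a b.
Variable covc : rel T.
Hypothesis covcP : forall a b,
  reflect (ltc a b /\ forall w, ltc a w -> ~~ ltc w b) (covc a b).

Lemma MC_xx x : #|MC (I x x)| = 1.
Proof.
have vx : forall u : seq_sub (I x x), ssval u = x.
  by case=> t /=; rewrite mem_I => /andP[h1 h2]; apply: le_anti.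
suff -> : MC (I x x) = [set setT] by rewrite cards1.
apply/setP => A; rewrite !inE; apply/maxchP/eqP.
- move=> [_ H]; apply/setP => w; rewrite inE; apply: H => u _.
  by rewrite !vx /cmp le_refl.
- move=> ->; split; last by move=> w _; rewrite inE.
  by apply/chP => u v _ _; rewrite !vx /cmp le_refl.
Qed.


Section Rec.
Variables x y : T.
Hypothesis xy : ltc x y.

Definition haspred (A : {set seq_sub (I x y)}) z :=
  [forall u in A, (ssval u != y) ==> le (ssval u) z] && memT A z && (z != y).

Lemma lexy : le x y. Proof. by case/andP: xy. Qed.

Lemma inI (u : seq_sub (I x y)) : le x (ssval u) && le (ssval u) y.
Proof. by rewrite -mem_I; case: u. Qed.

Lemma y_in (A : {set seq_sub (I x y)}) : A \in MC (I x y) -> memT A y.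
Proof.
move=> AM; apply: MC_mem => //; first by rewrite mem_I lexy le_refl.
by move=> u _; case/andP: (inI u) => _ h; rewrite /cmp h orbT.
Qed.

Lemma x_in (A : {set seq_sub (I x y)}) : A \in MC (I x y) -> memT A x.
Proof.
move=> AM; apply: MC_mem => //; first by rewrite mem_I lexy le_refl.
by move=> u _; case/andP: (inI u) => h _; rewrite /cmp h.
Qed.

Lemma uniq_pred (A : {set seq_sub (I x y)}) z1 z2 : haspred A z1 -> haspred A z2 -> z1 = z2.
Proof.
move=> /andP[/andP[/forallP H1 /existsP[u1 /andP[u1A /eqP e1]]] n1].
move=> /andP[/andP[/forallP H2 /existsP[u2 /andP[u2A /eqP e2]]] n2].
apply: le_anti.
  by have := H2 u1; rewrite u1A e1 n1.
by have := H1 u2; rewrite u2A e2 n2.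
Qed.

Lemma exists_pred (A : {set seq_sub (I x y)}) : A \in MC (I x y) ->
  exists2 z, z \in I x y & covc z y && haspred A z.
Proof.
move=> AM; have cA := MC_ch AM.
set A' := [set u in A | ssval u != y].
have [ux /andP[uxA /eqP ex]] := existsP (x_in AM).
have uxA' : ux \in A'.
  by rewrite /A' !inE uxA ex; case/andP: xy.
pose F (u : seq_sub (I x y)) := #|[set v in A | le (ssval v) (ssval u)]|.
case: (@arg_maxnP _ ux (mem A') F uxA') => u0 u0A' Hmax.
have u0A : u0 \in A by move: u0A'; rewrite /A' !inE => /andP[].
have u0y : ssval u0 != y by move: u0A'; rewrite /A' !inE => /andP[].
have Hle : forall u, u \in A' -> le (ssval u) (ssval u0).
  move=> u uA'; have uA : u \in A by move: uA'; rewrite /A' !inE => /andP[].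
  apply/negPn/negP => nle.
  have l0u : le (ssval u0) (ssval u).
    by move/chP: cA => /(_ u u0 uA u0A); rewrite /cmp (negbTE nle).
  have : [set v in A | le (ssval v) (ssval u0)] \proper
         [set v in A | le (ssval v) (ssval u)].
    apply/properP; split.
      apply/subsetP => v; rewrite !inE => /andP[-> h] /=.
      exact: le_trans h l0u.
    by exists u; rewrite !inE ?uA ?le_refl // (negbTE nle).
  have := Hmax u uA'; rewrite /F => h.
  by move/proper_card/leq_trans/(_ h); rewrite ltnn.
exists (ssval u0); first by case: u0 {u0A' Hmax Hle u0A u0y}.
have hp : haspred A (ssval u0).
  rewrite /haspred u0y memTE u0A !andbT.
  apply/forallP => u; apply/implyP => uA; apply/implyP => uy.
  by apply: Hle; rewrite /A' !inE uA.
rewrite hp andbT; apply/covcP; split.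
  by rewrite /ltc u0y; case/andP: (inI u0).
move=> w /andP[nw lw]; apply/negP => /andP[nwy lwy].
have wI : w \in I x y.
  rewrite mem_I lwy andbT; case/andP: (inI u0) => h _.
  exact: le_trans h lw.
have : memT A w.
  apply: MC_mem => // u uA; case: (eqVneq (ssval u) y) => [->|uy].
    by rewrite /cmp lwy.
  have := Hle u; rewrite /A' !inE uA uy => /(_ isT) h.
  by rewrite /cmp (le_trans h lw) orbT.
case/existsP=> v /andP[vA /eqP ev].
have := Hle v; rewrite /A' !inE vA ev nwy => /(_ isT) h.
by move: nw; rewrite (le_anti h lw) eqxx.
Qed.

Lemma sum_pred (A : {set seq_sub (I x y)}) : A \in MC (I x y) ->
  \sum_(z <- I x y | covc z y) (haspred A z : nat) = 1.
Proof.
move=> AM; have [z0 z0I /andP[c0 h0]] := exists_pred AM.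
rewrite -big_filter (bigD1_seq z0) ?filter_uniq // ?mem_filter ?c0 //= h0.
rewrite big1 ?addn0 // => z zz0; case: (boolP (haspred A z)) => // hz.
by move: zz0; rewrite (uniq_pred hz h0) eqxx.
Qed.

Definition phi z (B : {set seq_sub (I x z)}) : {set seq_sub (I x y)} :=
  [set u | (ssval u == y) || memT B (ssval u)].

Section Z.
Variable z : T.
Hypothesis zI : z \in I x y.
Hypothesis zc : covc z y.

Lemma ltzy : ltc z y. Proof. by case/covcP: zc. Qed.
Lemma lezy : le z y. Proof. by case/andP: ltzy. Qed.

Lemma inIz (b : seq_sub (I x z)) : le x (ssval b) && le (ssval b) z.
Proof. by rewrite -mem_I; case: b. Qed.

Lemma bI (b : seq_sub (I x z)) : ssval b \in I x y.
Proof.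
by case/andP: (inIz b) => h1 h2; rewrite mem_I h1 (le_trans h2 lezy).
Qed.

Lemma b_ne_y (b : seq_sub (I x z)) : ssval b != y.
Proof.
apply/eqP => e; case/andP: (inIz b) => _; rewrite e => yz.
by move: ltzy; rewrite /ltc (le_anti lezy yz) eqxx.
Qed.

Lemma phi_inj : injective (phi (z:=z)).
Proof.
move=> B1 B2 e; apply/setP => b; rewrite -!memTE.
move/setP/(_ (SeqSub (bI b))): e.
by rewrite !inE /= (negbTE (b_ne_y b)).
Qed.

Lemma zIz : z \in I x z.
Proof. by rewrite mem_I le_refl andbT; move: zI; rewrite mem_I => /andP[]. Qed.

Lemma phi_img : [set A in MC (I x y) | haspred A z] = phi (z:=z) @: MC (I x z).
Proof.
apply/setP => A; rewrite inE; apply/andP/imsetP.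
- move=> [AM hp].
  have hp1 : forall u, u \in A -> ssval u != y -> le (ssval u) z.
    move=> u uA uy; case/andP: hp => /andP[/forallP H _] _.
    by have := H u; rewrite uA uy.
  have uIz : forall u, u \in A -> ssval u != y -> ssval u \in I x z.
    move=> u uA uy; rewrite mem_I (hp1 u uA uy) andbT.
    by case/andP: (inI u).
  exists [set b : seq_sub (I x z) | memT A (ssval b)].
    rewrite inE; apply/maxchP; split.
      apply/chP => b1 b2; rewrite !inE => /existsP[a1 /andP[a1A /eqP e1]].
      move=> /existsP[a2 /andP[a2A /eqP e2]]; rewrite -e1 -e2.
      by move/chP: (MC_ch AM); apply.
    move=> w Hw; rewrite inE; apply: (MC_mem AM (bI w)) => u uA.
    case: (eqVneq (ssval u) y) => [->|uy].
      by case/andP: (inIz w) => _ h; rewrite /cmp (le_trans h lezy).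
    have := Hw (SeqSub (uIz u uA uy)); rewrite inE /= memTE uA; by apply.
  apply/(@setP _ A) => u; rewrite !inE.
  case: (eqVneq (ssval u) y) => [uy|uy] /=.
    by rewrite -memTE uy (y_in AM).
  apply/idP/idP => [uA|/existsP[b /andP[bB /eqP eb]]].
    by rewrite (memTP _ (uIz u uA uy)) inE /= memTE.
  by move: bB; rewrite inE eb memTE.
- move=> [B BM ->].
  have zB : memT B z.
    apply: (MC_mem BM zIz) => b _.
    by case/andP: (inIz b) => _ h; rewrite /cmp h orbT.
  have zphi : SeqSub zI \in phi B by rewrite inE /= zB orbT.
  split.
    rewrite inE; apply/maxchP; split.
      apply/chP => u v; rewrite !inE.
      move=> /orP[/eqP uy|/existsP[b1 /andP[b1B /eqP e1]]];
      move=> /orP[/eqP vy|/existsP[b2 /andP[b2B /eqP e2]]].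
      + by rewrite uy vy /cmp le_refl.
      + by rewrite uy -e2 cmpC /cmp; case/andP: (inIz b2) => _ h; rewrite (le_trans h lezy).
      + by rewrite vy -e1 /cmp; case/andP: (inIz b1) => _ h; rewrite (le_trans h lezy).
      + by rewrite -e1 -e2; move/chP: (MC_ch BM); apply.
    move=> w Hw; rewrite /phi inE.
    case: (eqVneq (ssval w) y) => [->|wy]; first by rewrite ?eqxx.
    rewrite /=.
    have wz : le (ssval w) z.
      case: (boolP (le (ssval w) z)) => // nwz.
      have := Hw _ zphi; rewrite /= /cmp (negbTE nwz) /= => zw.
      have nzw : z != ssval w by apply: contraNneq nwz => <-; rewrite le_refl.
      have := (elimT (covcP z y) zc).2 (ssval w); rewrite /ltc nzw zw => /(_ isT).
      by rewrite wy; case/andP: (inI w) => _ ->.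
    have wIz : ssval w \in I x z by rewrite mem_I wz andbT; case/andP: (inI w).
    apply: (MC_mem BM wIz) => b bB.
    by apply: (Hw (SeqSub (bI b))); rewrite /phi inE /= memTE bB orbT.
  rewrite /haspred (memTP _ zI) zphi andbT.
  case/andP: ltzy => -> _; rewrite andbT.
  apply/forallP => u; apply/implyP; rewrite inE.
  move=> /orP[/eqP->|/existsP[b /andP[_ /eqP eb]]]; first by rewrite eqxx.
  by rewrite -eb; case/andP: (inIz b) => _ ->; rewrite implybT.
Qed.

End Z.

Lemma MC_rec : #|MC (I x y)| = \sum_(z <- I x y | covc z y) #|MC (I x z)|.
Proof.
rewrite -sum1_card.
rewrite (eq_bigr (fun A => \sum_(z <- I x y | covc z y) (haspred A z : nat)));
  last by move=> A AM; rewrite sum_pred.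
rewrite exchange_big [RHS]big_seq_cond [LHS]big_seq_cond.
apply: eq_bigr => z /andP[zI zc].
rewrite -(card_in_imset (f := phi (z:=z)) (D := MC (I x z)));
  last by move=> B1 B2 _ _ /(phi_inj zc).
rewrite -phi_img //.
rewrite -sum1_card (eq_bigl (fun A => (A \in MC (I x y)) && haspred A z));
  last by move=> A; rewrite inE.
rewrite big_mkcondr.
by apply: eq_bigr => A _; case: haspred.
Qed.

End Rec.

End ChainCore.

Section Inst.
Variables (disp : Order.disp_t) (T : porderType disp) (L : locfin T).
Local Open Scope order_scope.

Definition leT : rel T := fun a b => a <= b.
Definition leD : rel T := fun a b => b <= a.
Definition itvD : T -> T -> seq T := fun a b => itv L b a.

Lemma nmc_E x y : num_max_chains L x y = #|MC leT (itv L x y)|.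
Proof. by []. Qed.

Lemma MC_DE s : MC leD s = MC leT s.
Proof.
apply/setP => A; rewrite !inE; apply: maxset_eq => B.
by apply/idP/idP => /chP H; apply/chP => u v uA vA; have := H u v uA vA;
  rewrite /cmp /leD /leT orbC.
Qed.

Lemma ltcT a b : ltc leT a b = (a < b).
Proof. by rewrite /ltc /leT lt_def eq_sym. Qed.

Lemma ltcD a b : ltc leD a b = (b < a).
Proof. by rewrite /ltc /leD lt_def. Qed.

Lemma covcT a b : reflect (ltc leT a b /\ forall w, ltc leT a w -> ~~ ltc leT w b)
  (covb L a b).
Proof.
apply: (iffP (covbP L a b)) => [[ab H]|[ab H]]; split; rewrite ?ltcT //.
- move=> w aw; apply/negP => wb; apply: H; exists w.
  by rewrite -(ltcT a w) -(ltcT w b) aw wb.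
- by rewrite -ltcT.
- move=> [w /andP[aw wb]]; have := H w; rewrite !ltcT aw wb => /(_ isT).
  by [].
Qed.

Lemma covcD a b : reflect (ltc leD a b /\ forall w, ltc leD a w -> ~~ ltc leD w b)
  (covb L b a).
Proof.
apply: (iffP (covbP L b a)) => [[ab H]|[ab H]]; split; rewrite ?ltcD //.
- move=> w aw; apply/negP => wb; apply: H; exists w.
  by rewrite -(ltcD w b) -(ltcD a w) aw wb.
- by rewrite -ltcD.
- move=> [w /andP[aw wb]]; have := H w; rewrite !ltcD aw wb => /(_ isT).
  by [].
Qed.

Lemma nmc_xx x : num_max_chains L x x = 1%N.
Proof.
rewrite nmc_E; apply: MC_xx.
- exact: lexx.
- by move=> a b h1 h2; apply: le_anti; rewrite /leT in h1 h2; rewrite h1 h2.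
- exact: mem_itv.
Qed.

Lemma nmc_top x y : x < y ->
  num_max_chains L x y = (\sum_(z <- itv L x y | covb L z y) num_max_chains L x z)%N.
Proof.
move=> xy; rewrite nmc_E; apply: MC_rec.
- exact: lexx.
- by move=> a b h1 h2; apply: le_anti; rewrite /leT in h1 h2; rewrite h1 h2.
- move=> a b c h1 h2; exact: le_trans h1 h2.
- exact: itv_uniq.
- exact: mem_itv.
- exact: covcT.
- by rewrite ltcT.
Qed.

Lemma nmc_bot x y : x < y ->
  num_max_chains L x y = (\sum_(z <- itv L x y | covb L x z) num_max_chains L z y)%N.
Proof.
move=> xy; rewrite nmc_E -MC_DE.
have := @MC_rec T leD _ _ _ itvD _ _ (fun a b => covb L b a) _ y x.
rewrite /itvD => -> //.
- by apply: eq_bigr => z _; rewrite MC_DE.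
- move=> a /=; exact: lexx.
- by move=> a b h1 h2; apply: le_anti; rewrite /leD in h1 h2; rewrite h1 h2.
- move=> a b c h1 h2; exact: le_trans h2 h1.
- by move=> a b; apply: itv_uniq.
- by move=> a b c; rewrite /itvD mem_itv andbC.
- exact: covcD.
- by rewrite ltcD.
Qed.

End Inst.

Section Alg.
Variables (disp : Order.disp_t) (T : porderType disp) (L : locfin T).
Variable (R : comPzRingType).
Local Open Scope ring_scope.

Lemma sum_itv_filter (s1 s2 : seq T) (P : pred T) (F : T -> R) :
  uniq s1 -> uniq s2 -> s1 =i [pred w | (w \in s2) && P w] ->
  \sum_(w <- s1) F w = \sum_(w <- s2 | P w) F w.
Proof.
move=> u1 u2 e; rewrite -[RHS]big_filter; apply: perm_big; apply: uniq_perm => //.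
  by rewrite filter_uniq.
by move=> w; rewrite e mem_filter inE andbC.
Qed.

Lemma exch_itv a y (F : T -> T -> R) :
  \sum_(x <- itv L a y) \sum_(w <- itv L a x) F w x =
  \sum_(w <- itv L a y) \sum_(x <- itv L w y) F w x.
Proof.
rewrite (eq_big_seq (fun x => \sum_(w <- itv L a y | (w <= x)%O) F w x)); last first.
  move=> x; rewrite mem_itv => /andP[ax xy]; apply: sum_itv_filter; rewrite ?itv_uniq //.
  move=> w; rewrite !inE !mem_itv; apply/andP/andP => [[aw wx]|[/andP[aw _] wx]].
    by rewrite aw wx (le_trans wx xy).
  by [].
rewrite [RHS](eq_big_seq (fun w => \sum_(x <- itv L a y | (w <= x)%O) F w x)); last first.
  move=> w; rewrite mem_itv => /andP[aw wy]; apply: sum_itv_filter; rewrite ?itv_uniq //.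
  move=> x; rewrite !inE !mem_itv; apply/andP/andP => [[wx xy]|[/andP[ax xy] wx]].
    by rewrite wx xy (le_trans aw wx).
  by [].
under eq_bigr do rewrite big_mkcond.
rewrite exchange_big.
by under eq_bigr do rewrite -big_mkcond.
Qed.

Variable eta : T -> T -> R.
Hypothesis eta_diag : forall x : T, eta x x = 1.
Hypothesis eta_cov : forall x y : T, covers x y -> eta x y = -1.
Hypothesis eta_else : forall x y : T, (x <= y)%O -> x != y -> ~ covers x y -> eta x y = 0.

Lemma etaE x z : (x <= z)%O -> eta x z = (x == z)%:R - (covb L x z)%:R.
Proof.
move=> xz; case: (eqVneq x z) => [<-|nxz].
  by rewrite eta_diag /covb ltxx /= subr0.
case: (boolP (covb L x z)) => c.
  rewrite eta_cov; last by apply/(covbP L).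
  by rewrite /= mulr0n mulr1n sub0r.
rewrite eta_else //; last by apply/(covbP L).
by rewrite /= mulr0n subr0.
Qed.

Lemma sum_eta_l x y (G : T -> R) : (x <= y)%O ->
  \sum_(z <- itv L x y) eta x z * G z = G x - \sum_(z <- itv L x y | covb L x z) G z.
Proof.
move=> xy.
rewrite (eq_big_seq (fun z => (x == z)%:R * G z - (covb L x z)%:R * G z)); last first.
  by move=> z; rewrite mem_itv => /andP[xz _]; rewrite etaE // mulrBl.
rewrite sumrB; congr (_ - _).
  rewrite (bigD1_seq x) ?mem_itv ?lexx ?xy ?itv_uniq //= eqxx mul1r big1 ?addr0 //.
  by move=> z zx; rewrite eq_sym (negbTE zx) mul0r.
by rewrite [RHS]big_mkcond; apply: eq_bigr => z _; case: covb; rewrite ?mul1r ?mul0r.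
Qed.

Lemma sum_eta_r x y (G : T -> R) : (x <= y)%O ->
  \sum_(z <- itv L x y) G z * eta z y = G y - \sum_(z <- itv L x y | covb L z y) G z.
Proof.
move=> xy.
rewrite (eq_big_seq (fun z => (z == y)%:R * G z - (covb L z y)%:R * G z)); last first.
  by move=> z; rewrite mem_itv => /andP[_ zy]; rewrite etaE // mulrBr [G z * (_ == _)%:R]mulrC [G z * _]mulrC.
rewrite sumrB; congr (_ - _).
  rewrite (bigD1_seq y) ?mem_itv ?lexx ?xy ?itv_uniq //= eqxx mul1r big1 ?addr0 //.
  by move=> z zy; rewrite (negbTE zy) mul0r.
by rewrite [RHS]big_mkcond; apply: eq_bigr => z _; case: covb; rewrite ?mul1r ?mul0r.
Qed.

Definition Nc x y : R := (num_max_chains L x y)%:R.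

Lemma inv_l x y : (x <= y)%O -> inc_mul L eta Nc x y = inc_unit R x y.
Proof.
move=> xy; rewrite /inc_mul sum_eta_l // /inc_unit.
case: (eqVneq x y) => [<-|nxy].
  rewrite big1_seq ?subr0 /Nc ?nmc_xx //.
  move=> z /andP[/andP[xz _]]; rewrite mem_itv => /andP[_ zx].
  by move: (lt_le_trans xz zx); rewrite ltxx.
have lxy : (x < y)%O by rewrite lt_neqAle nxy xy.
by rewrite /Nc (nmc_bot L lxy) natr_sum subrr /= mulr0n.
Qed.

Lemma inv_r x y : (x <= y)%O -> inc_mul L Nc eta x y = inc_unit R x y.
Proof.
move=> xy; rewrite /inc_mul sum_eta_r // /inc_unit.
case: (eqVneq x y) => [<-|nxy].
  rewrite big1_seq ?subr0 /Nc ?nmc_xx //.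
  move=> z /andP[/andP[zx _]]; rewrite mem_itv => /andP[xz _].
  by move: (lt_le_trans zx xz); rewrite ltxx.
have lxy : (x < y)%O by rewrite lt_neqAle nxy xy.
by rewrite /Nc (nmc_top L lxy) natr_sum subrr /= mulr0n.
Qed.

End Alg.

Local Open Scope ring_scope.

Theorem mainTheorem7 (disp : Order.disp_t) (T : porderType disp) (L : locfin T)
  (R : comPzRingType) (eta : T -> T -> R)
  (eta_diag : forall x : T, eta x x = 1)
  (eta_cov : forall x y : T, covers x y -> eta x y = -1)
  (eta_else : forall x y : T, (x <= y)%O -> x != y -> ~ covers x y -> eta x y = 0) :
  (exists etainv : T -> T -> R, inc_inverse L eta etainv /\
     forall x y : T, (x <= y)%O -> etainv x y = (num_max_chains L x y)%:R)
  /\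
  (forall (a : T) (f g : T -> R),
     (forall y : T, (a <= y)%O ->
        g y = f y - \sum_(x <- itv L a y | covb L x y) f x)
     <->
     (forall y : T, (a <= y)%O ->
        f y = \sum_(x <- itv L a y) (num_max_chains L x y)%:R * g x)).
Proof.
have IL := inv_l L eta_diag eta_cov eta_else.
have IR := inv_r L eta_diag eta_cov eta_else.
split.
  exists (Nc L R); split; last by [].
  by split => x y xy; [apply: IL | apply: IR].
move=> a f g.
have gE : forall y, (a <= y)%O ->
   (g y = f y - \sum_(x <- itv L a y | covb L x y) f x) <->
   (g y = \sum_(x <- itv L a y) f x * eta x y).
  by move=> y ay; rewrite (sum_eta_r L eta_diag eta_cov eta_else).
split => H y ay.
- rewrite (eq_big_seq (fun x => Nc L R x y * \sum_(w <- itv L a x) f w * eta w x)); last first.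
    by move=> x; rewrite mem_itv => /andP[ax _]; rewrite -(proj1 (gE x ax) (H x ax)).
  rewrite (eq_bigr (fun x => \sum_(w <- itv L a x) f w * (eta w x * Nc L R x y))); last first.
    by move=> x _; rewrite mulrC mulr_suml; apply: eq_bigr => w _; rewrite mulrA.
  rewrite exch_itv.
  rewrite (eq_big_seq (fun w => f w * (w == y)%:R)); last first.
    move=> w; rewrite mem_itv => /andP[_ wy]; rewrite -mulr_sumr.
    by have := IL w y wy; rewrite /inc_mul /inc_unit => ->.
  rewrite (bigD1_seq y) ?mem_itv ?ay ?lexx ?itv_uniq //= eqxx mulr1 big1 ?addr0 //.
  by move=> w wy; rewrite (negbTE wy) mulr0.
- apply/gE => //.
  rewrite (eq_big_seq (fun x => (\sum_(w <- itv L a x) Nc L R w x * g w) * eta x y)); last first.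
    by move=> x; rewrite mem_itv => /andP[ax _]; rewrite (H x ax).
  rewrite (eq_bigr (fun x => \sum_(w <- itv L a x) g w * (Nc L R w x * eta x y))); last first.
    by move=> x _; rewrite mulr_suml; apply: eq_bigr => w _; rewrite mulrAC mulrC.
  rewrite exch_itv.
  rewrite (eq_big_seq (fun w => g w * (w == y)%:R)); last first.
    move=> w; rewrite mem_itv => /andP[_ wy]; rewrite -mulr_sumr.
    by have := IR w y wy; rewrite /inc_mul /inc_unit => ->.
  rewrite (bigD1_seq y) ?mem_itv ?ay ?lexx ?itv_uniq //= eqxx mulr1 big1 ?addr0 //.
  by move=> w wy; rewrite (negbTE wy) mulr0.
Qed.
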